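(* Let $t_1<\dots<t_N$, $q_1,\dots,q_N\ge0$, and let $\tau$ be the distribution of an offer profile subject to $((q_1,\dots,q_N),(t_1,\dots,t_N))$ (so in particular $\tau(\mathbb R)=\sum_k q_k$ and $\int t\,d\tau(t)=\sum_k q_kt_k$). Then the recursive procedure $FEASIBLE((q_1,\dots,q_N),(t_1,\dots,t_N),\tau)$ always stops, i.e. it terminates after finitely many recursive calls.
   Context: Drivers form a measure space $(I,di)$ of total mass $\sum_k q_k$; an offer profile subject to $(\mathbf q,\mathbf t)$ is a measurable $T:I\to[t_1,t_N]$ with $\int_I T_i\,di=\sum_k q_kt_k$; its distribution is $\tau(B)=di(\{i:T_i\in B\})$. The procedure $FEASIBLE(\mathbf q,\mathbf t,\tau)$, for $N\ge0$, reals $t_1<\dots<t_N$, $q_1,\dots,q_N\ge0$ and a finite Borel measure $\tau$ on $\mathbb R$, returns a Boolean computed as follows. Set $t_{N+1}=+\infty$, $q_{N+1}=0$. (1) If $\tau((-\infty,t_1))>0$, return FALSE. (2) Else if $N=0$, return TRUE. (3) Else if $\tau([t_1,t_N])=0$, return TRUE. (4) Otherwise let $n$ be the smallest integer with $\tau([t_n,t_{n+1}])>0$. (4a) If $q_1=0$, return $FEASIBLE((q_2,\dots,q_N),(t_2,\dots,t_N),\tau)$. (4b) Else if $q_{n+1}=0$ and $N>1$, return $FEASIBLE$ applied to the vectors with the $(n+1)$-th entries removed and the same $\tau$. (4c) Otherwise define, for $t\in[t_n,t_{n+1}]$, $\alpha_1(t)=\frac{t_{n+1}-t}{t_{n+1}-t_1}$,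 $\alpha_{n+1}(t)=\frac{t-t_1}{t_{n+1}-t_1}$; for $m\ge0$ let $t^m=\inf\{t:\tau([t_n,t])>m\}$, $\tau^m=\tau|_{[t_n,t^m)}+(m-\tau([t_n,t^m)))\delta_{t^m}$, $J_1(m)=\int\alpha_1\,d\tau^m$, $J_{n+1}(m)=\int\alpha_{n+1}\,d\tau^m$; let $M=\tau([t_n,t_{n+1}])$, $M_1=\sup\{m\le M:J_1(m)<q_1\}$, $M_{n+1}=\sup\{m\le M:J_{n+1}(m)<q_{n+1}\}$, $M_{min}=\min\{M_1,M_{n+1}\}$; return $FEASIBLE((q_1-J_1(M_{min}),q_2,\dots,q_n,q_{n+1}-J_{n+1}(M_{min}),q_{n+2},\dots,q_N),(t_1,\dots,t_N),\tau-\tau^{M_{min}})$. *)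

(* Defs.v *)
From mathcomp Require Import all_boot all_order all_algebra.
From mathcomp Require Import all_classical all_reals all_analysis.
Set Implicit Arguments. Unset Strict Implicit. Unset Printing Implicit Defensive.
Import Order.TTheory GRing.Theory Num.Theory.
Local Open Scope ring_scope.
Local Open Scope classical_set_scope.

(* A state of the procedure FEASIBLE(q, t, tau).  Indices are 0-based:
   q`_k is q_{k+1} and t`_k is t_{k+1} of the paper; N = size t. *)
Record state (R : realType) := State {
  st_q : seq R;
  st_t : seq R;
  st_tau : {measure set R -> \bar R} }.

Section Feasible.
Variable R : realType.

Definition rem_at (i : nat) (s : seq R) : seq R := take i s ++ drop i.+1 s.

(* the interval [t_n, t_{n+1}] of the paper with t_{N+1} = +oo,
   for the 0-based index j = n - 1 *)
Definition cell (t : seq R) (j : nat) : set R :=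
  if (j.+1 < size t)%N then `[t`_j, t`_j.+1]%classic else `[t`_j, +oo[%classic.

(* The procedure reaches step (4): N >= 1, not (1), not (3). *)
Definition reaches4 (s : state R) : Prop :=
  let t := st_t s in let tau := st_tau s in
  (0 < size t)%N /\ tau `]-oo, t`_0[%classic = 0%E /\
  tau `[t`_0, t`_(size t).-1]%classic != 0%E.

(* j = n - 1 where n is the smallest integer with tau([t_n,t_{n+1}]) > 0 *)
Definition first_cell (s : state R) (j : nat) : Prop :=
  (j < size (st_t s))%N /\ (0 < st_tau s (cell (st_t s) j))%E /\
  forall k, (k < j)%N -> ~ (0 < st_tau s (cell (st_t s) k))%E.

(* ---- step (4c); c = t_n, a = t_1, b = t_{n+1} ---- *)
Section Step4c.
Variable tau : {measure set R -> \bar R}.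
Variables (a b c : R).

Definition alpha1 (x : R) : R := (b - x) / (b - a).
Definition alphan1 (x : R) : R := (x - a) / (b - a).

(* t^m = inf {t : tau([t_n, t]) > m}, in the extended reals (inf of the
   empty set is +oo) *)
Definition tpt (m : R) : \bar R :=
  ereal_inf [set x%:E | x in [set x : R | (m%:E < tau `[c, x]%classic)%E]].

Definition Iv (e : \bar R) : set R :=
  match e with
  | r%:E => `[c, r[%classic
  | +oo%E => `[c, +oo[%classic
  | -oo%E => set0
  end.

Definition atomw (m : R) : R := m - fine (tau (Iv (tpt m))).

(* tau^m = tau|_[t_n, t^m) + (m - tau([t_n,t^m))) delta_{t^m}
   (no atom when t^m = +oo, in which case its weight is 0 anyway) *)
Definition taum (m : R) (A : set R) : \bar R :=
  (tau (A `&` Iv (tpt m)) +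
   match tpt m with
   | r%:E => (if `[< A r >] then (atomw m)%:E else 0%E)
   | _ => 0%E
   end)%E.

(* J(m) = int alpha d tau^m *)
Definition Jint (alpha : R -> R) (m : R) : R :=
  fine (\int[tau]_(x in Iv (tpt m)) (alpha x)%:E)%E +
  match tpt m with
  | r%:E => atomw m * alpha r
  | _ => 0
  end.

End Step4c.

Definition Mtot (s : state R) (j : nat) : R := fine (st_tau s (cell (st_t s) j)).

Definition J1 (s : state R) (j : nat) : R -> R :=
  let t := st_t s in
  Jint (st_tau s) t`_j (alpha1 t`_0 t`_j.+1).
Definition Jn1 (s : state R) (j : nat) : R -> R :=
  let t := st_t s in
  Jint (st_tau s) t`_j (alphan1 t`_0 t`_j.+1).

Definition M1 (s : state R) (j : nat) : R :=
  sup [set m : R | 0 <= m <= Mtot s j /\ J1 s j m < (st_q s)`_0].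
Definition Mn1 (s : state R) (j : nat) : R :=
  sup [set m : R | 0 <= m <= Mtot s j /\ Jn1 s j m < (st_q s)`_j.+1].
Definition Mmin (s : state R) (j : nat) : R := Num.min (M1 s j) (Mn1 s j).

Definition q4c (s : state R) (j : nat) : seq R :=
  let q := st_q s in
  set_nth 0 (set_nth 0 q 0 (q`_0 - J1 s j (Mmin s j)))
          j.+1 (q`_j.+1 - Jn1 s j (Mmin s j)).

(* Call s s' : running FEASIBLE on s makes the recursive call FEASIBLE(s').
   (The new measure tau - tau^{M_min} is given by any measure agreeing with
   it on Borel sets.) *)
Inductive Call (s : state R) : state R -> Prop :=
| Call4a j : reaches4 s -> first_cell s j -> (st_q s)`_0 = 0 ->
    Call s (State (behead (st_q s)) (behead (st_t s)) (st_tau s))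
| Call4b j : reaches4 s -> first_cell s j -> (st_q s)`_0 != 0 ->
    (st_q s)`_j.+1 = 0 -> (1 < size (st_t s))%N ->
    Call s (State (rem_at j.+1 (st_q s)) (rem_at j.+1 (st_t s)) (st_tau s))
| Call4c j (tau' : {measure set R -> \bar R}) :
    reaches4 s -> first_cell s j -> (st_q s)`_0 != 0 ->
    ~ ((st_q s)`_j.+1 = 0 /\ (1 < size (st_t s))%N) ->
    (j.+1 < size (st_t s))%N ->
    (forall A, measurable A ->
       tau' A = (st_tau s A - taum (st_tau s) (st_t s)`_j (Mmin s j) A)%E) ->
    Call s (State (q4c s j) (st_t s) tau').

Definition terminates (s : state R) : Prop := Acc (fun s' s0 => Call s0 s') s.

End Feasible.

(* Main.v *)
Require Import Defs.
From mathcomp Require Import all_boot all_order all_algebra.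
From mathcomp Require Import all_classical all_reals all_analysis.
From mathcomp Require Import measurable_realfun.
From mathcomp Require Import ring lra.
From mathcomp Require Import zify.
Import Order.TTheory GRing.Theory Num.Theory.
Local Open Scope ring_scope.
Local Open Scope classical_set_scope.

Section Meas.
Variable R : realType.
Variable tau : {measure set R -> \bar R}.
Hypothesis taufin : (tau setT < +oo)%E.

Lemma mfin A : measurable A -> tau A \is a fin_num.
Proof.
move=> mA; rewrite ge0_fin_numE ?measure_ge0 //.
apply: (le_lt_trans _ taufin); apply: le_measure; rewrite ?inE //.
Qed.

Lemma le_bigcup (F : nat -> set R) (m : \bar R) :
  (forall n, measurable (F n)) -> nondecreasing_seq F ->
  (forall n, (tau (F n) <= m)%E) -> (tau (\bigcup_n F n) <= m)%E.
Proof.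
move=> mF nd Fm.
have h := @nondecreasing_cvg_mu _ _ _ tau _ mF (bigcupT_measurable _ mF) nd.
rewrite -(cvg_lim _ h) //; apply: lime_le; first by apply/cvg_ex; eexists; exact: h.
by apply: nearW => n; exact: Fm.
Qed.

Lemma ge_bigcap (F : nat -> set R) (m : \bar R) :
  (forall n, measurable (F n)) -> nonincreasing_seq F ->
  (forall n, (m <= tau (F n))%E) -> (m <= tau (\bigcap_n F n))%E.
Proof.
move=> mF nd Fm.
have F0 : (tau (F 0%N) < +oo)%E.
  by apply: (le_lt_trans _ taufin); apply: le_measure; rewrite ?inE //.
have h := @nonincreasing_cvg_mu _ _ _ tau _ F0 mF (bigcapT_measurable mF) nd.
rewrite -(cvg_lim _ h) //; apply: lime_ge; first by apply/cvg_ex; eexists; exact: h.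
by apply: nearW => n; exact: Fm.
Qed.


Variable c : R.
Local Notation S m := [set x : R | (m%:E < tau `[c, x])%E].

Lemma tptE m : tpt tau c m = ereal_inf [set x%:E | x in S m].
Proof. by []. Qed.

Lemma tpt_le m x : (m%:E < tau `[c, x])%E -> (tpt tau c m <= x%:E)%E.
Proof. by move=> h; apply: ereal_inf_lbound; exists x. Qed.

Lemma tpt_gt m x : (tpt tau c m < x%:E)%E -> (m%:E < tau `[c, x])%E.
Proof.
move=> /ereal_inf_lt [_ [z Sz <-]] zx.
apply: (lt_le_trans Sz); apply: le_measure; rewrite ?inE //; try exact: measurable_itv.
by apply: subset_itvl; rewrite bnd_simp -lee_fin ltW.
Qed.

Lemma tpt_ge_notS m x : (x%:E < tpt tau c m)%E -> (tau `[c, x] <= m%:E)%E.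
Proof. by move=> h; rewrite leNgt; apply/negP => /tpt_le; rewrite leNgt h. Qed.

Lemma tpt_ge_c m : 0 <= m -> (c%:E <= tpt tau c m)%E.
Proof.
move=> m0; apply: le_ereal_inf_tmp => _ [z Sz <-]; rewrite lee_fin leNgt; apply/negP => zc.
have e : `[c, z] = set0.
  apply/seteqP; split => x //=; rewrite in_itv /= => /andP[cx xz].
  by move: (le_lt_trans (le_trans cx xz) zc); rewrite ltxx.
by move: Sz; rewrite /= e measure0 lte_fin ltNge m0.
Qed.

Lemma tpt_mono m m' : m <= m' -> (tpt tau c m <= tpt tau c m')%E.
Proof.
move=> mm; apply: ereal_inf_le_tmp => _ [z Sz <-]; exists z => //=.
by apply: le_lt_trans Sz; rewrite lee_fin.
Qed.

Lemma F1 m r : tpt tau c m = r%:E -> (tau `[c, r[ <= m%:E)%E.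
Proof.
move=> tr.
have -> : `[c, r[ = \bigcup_n `[c, r - n.+1%:R^-1].
  apply/seteqP; split => x /=.
    rewrite in_itv /= => /andP[cx xr].
    have [k hk] := ltr_add_invr xr; exists k => //=.
    by rewrite in_itv /= cx /= lerBrDr ltW.
  move=> [k _] /=; rewrite !in_itv /= => /andP[-> h] /=.
  by apply: (le_lt_trans h); rewrite ltrBlDr ltrDl invr_gt0 ltr0n.
apply: le_bigcup => [n|n k nk|n]; first exact: measurable_itv.
  apply/subsetPset; apply: subset_itvl; rewrite bnd_simp lerB // lef_pV2 ?posrE ?ltr0n //.
  by rewrite ler_nat.
apply: tpt_ge_notS; rewrite tr lte_fin ltrBlDr ltrDl invr_gt0 ltr0n //.
Qed.

Lemma F1oo m : tpt tau c m = +oo%E -> (tau `[c, +oo[ <= m%:E)%E.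
Proof.
move=> tr.
have -> : `[c, +oo[ = \bigcup_n `[c, c + n%:R].
  apply/seteqP; split => x /=.
    rewrite in_itv /= andbT => cx.
    exists (Num.Def.archi_bound (x - c)) => //=.
    rewrite in_itv /= cx /= -lerBlDl; apply: ltW.
    by apply: archi_boundP; rewrite subr_ge0.
  by move=> [k _] /=; rewrite !in_itv /= andbT => /andP[].
apply: le_bigcup => [n|n k nk|n]; first exact: measurable_itv.
  by apply/subsetPset; apply: subset_itvl; rewrite bnd_simp lerD2l ler_nat.
by apply: tpt_ge_notS; rewrite tr ltry.
Qed.

Lemma F2 m r : tpt tau c m = r%:E -> (m%:E <= tau `[c, r])%E.
Proof.
move=> tr.
have -> : `[c, r] = \bigcap_n `[c, r + n.+1%:R^-1].
  apply/seteqP; split => x /=.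
    rewrite in_itv /= => /andP[cx xr] k _ /=.
    by rewrite in_itv /= cx /= (le_trans xr) // lerDl invr_ge0.
  move=> h; rewrite in_itv /=.
  have := h 0%N I; rewrite /= in_itv /= => /andP[-> _] /=.
  rewrite leNgt; apply/negP => rx.
  have [k hk] := ltr_add_invr rx.
  by have := h k I; rewrite /= in_itv /= => /andP[_]; rewrite leNgt hk.
apply: ge_bigcap => [n|n k nk|n]; first exact: measurable_itv.
  apply/subsetPset; apply: subset_itvl; rewrite bnd_simp lerD2l lef_pV2 ?posrE ?ltr0n //.
  by rewrite ler_nat.
apply/ltW/tpt_gt; rewrite tr lte_fin ltrDl invr_gt0 ltr0n //.
Qed.



Lemma atomw_ge0 m r : tpt tau c m = r%:E -> 0 <= atomw tau c m.
Proof.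
move=> tr; rewrite /atomw tr /= subr_ge0 -lee_fin fineK ?(F1 _ _ tr) //.
by apply: mfin; exact: measurable_itv.
Qed.

Lemma taum_ge0 m A : measurable A -> (0 <= taum tau c m A)%E.
Proof.
move=> mA; rewrite /taum; apply: adde_ge0; first exact: measure_ge0.
case e: (tpt tau c m) => [r| |] //; case: ifP => // _.
by rewrite lee_fin; exact: (atomw_ge0 _ _ e).
Qed.

Lemma taum_fin m A : measurable A -> taum tau c m A \is a fin_num.
Proof.
move=> mA; rewrite /taum fin_numD; apply/andP; split.
  apply: mfin; apply: measurableI => //.
  by case: (tpt tau c m) => [r| |] /=; try exact: measurable_itv.
by case: (tpt tau c m) => [r| |] //; case: ifP.
Qed.

Definition Fn (A : set R) : R := fine (tau A).

Lemma Fadd A B : measurable A -> measurable B -> A `&` B = set0 ->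
  Fn (A `|` B) = Fn A + Fn B.
Proof.
by move=> mA mB AB; rewrite /Fn measureU // fineD //; apply: mfin.
Qed.

Lemma Fge0 A : 0 <= Fn A.
Proof. exact: fine_ge0. Qed.

Lemma Fle A B : measurable A -> measurable B -> A `<=` B -> Fn A <= Fn B.
Proof.
move=> mA mB AB; rewrite /Fn fine_le ?mfin //.
by apply: le_measure; rewrite ?inE.
Qed.

Variable b : R.
Variable alpha : R -> R.
Hypothesis malpha : measurable_fun setT alpha.
Hypothesis alpha01 : forall x, c <= x <= b -> 0 <= alpha x <= 1.

Definition G (A : set R) := (\int[tau]_(x in A) (alpha x)%:E)%E.
Definition Gn A := fine (G A).

Lemma mfa A : measurable A -> measurable_fun A (fun x => (alpha x)%:E).
Proof.
move=> mA; apply/measurable_EFinP; exact: measurable_funS malpha.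
Qed.

Lemma G_ge0 A : A `<=` `[c, b] -> (0 <= G A)%E.
Proof.
move=> Acb; apply: integral_ge0 => x /Acb /=; rewrite in_itv /= => /alpha01 /andP[h _].
by rewrite lee_fin.
Qed.

Lemma G_le A : measurable A -> A `<=` `[c, b] -> (G A <= tau A)%E.
Proof.
move=> mA Acb; rewrite -[X in (_ <= X)%E]mul1e -integral_cst //.
apply: ge0_le_integral => //; first by move=> x /Acb /=; rewrite in_itv /= => /alpha01 /andP[h _]; rewrite lee_fin.
  exact: mfa.
by move=> x /Acb /=; rewrite in_itv /= => /alpha01 /andP[_ h]; rewrite lee_fin.
Qed.

Lemma G_fin A : measurable A -> A `<=` `[c, b] -> G A \is a fin_num.
Proof.
move=> mA Acb; rewrite ge0_fin_numE ?G_ge0 //.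
have h1 := G_le _ mA Acb; have := mfin _ mA.
rewrite ge0_fin_numE ?measure_ge0 // => h2; exact: le_lt_trans h1 h2.
Qed.

Lemma Gn_ge0 A : A `<=` `[c, b] -> 0 <= Gn A.
Proof. by move=> h; apply: fine_ge0; apply: G_ge0. Qed.

Lemma Gn_le A : measurable A -> A `<=` `[c, b] -> Gn A <= Fn A.
Proof. by move=> mA h; apply: fine_le; rewrite ?G_fin ?mfin ?G_le. Qed.

Lemma Gadd A B : measurable A -> measurable B -> A `&` B = set0 ->
  A `<=` `[c, b] -> B `<=` `[c, b] -> Gn (A `|` B) = Gn A + Gn B.
Proof.
move=> mA mB AB Acb Bcb; rewrite /Gn /G integral_setU //.
- by rewrite fineD //; apply: G_fin.
- by apply: mfa; apply: measurableU.
- by rewrite disj_set2E AB.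
Qed.

Lemma Gset1 x : Gn [set x] = alpha x * Fn [set x].
Proof.
rewrite /Gn /G (eq_integral (fun=> (alpha x)%:E : \bar R)); last first.
  by move=> y; rewrite inE /= => ->.
by rewrite integral_cst //= ?fineM //; apply: mfin.
Qed.


Lemma E1 r : c <= r -> `[c, r] = `[c, r[ `|` [set r].
Proof.
move=> cr; apply/seteqP; split => x /=; rewrite !in_itv /=.
  move=> /andP[h1 h2]; have [xr|xr] := ltP x r; first by left; rewrite h1.
  by right; apply/eqP; rewrite eq_le h2 xr.
by move=> [/andP[h1 h2]|->]; [rewrite h1 ltW | rewrite cr lexx].
Qed.

Lemma D1 r : `[c, r[ `&` [set r] = set0.
Proof.
by apply/seteqP; split => x //= [] /[swap] ->; rewrite in_itv /= ltxx andbF.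
Qed.

Lemma E2 r r' : c <= r -> r < r' -> `[c, r'[ = `[c, r] `|` `]r, r'[.
Proof.
move=> cr rr; apply/seteqP; split => x /=; rewrite !in_itv /=.
  move=> /andP[h1 h2]; have [xr|xr] := leP x r; first by left; rewrite h1.
  by right; rewrite h2.
move=> [/andP[h1 h2]|/andP[h1 h2]]; first by rewrite h1 (le_lt_trans h2).
by rewrite h2 (le_trans cr (ltW h1)).
Qed.

Lemma D2 r r' : `[c, r] `&` `]r, r'[ = set0.
Proof.
apply/seteqP; split => x //= []; rewrite !in_itv /= => /andP[_ h1] /andP[h2 _].
by move: (le_lt_trans h1 h2); rewrite ltxx.
Qed.

Definition Jr r m := Gn `[c, r[ + (m - Fn `[c, r[) * alpha r.

Lemma core r r' m m' : c <= r -> r <= r' -> r' <= b -> m <= m' ->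
  Fn `[c, r[ <= m -> m <= Fn `[c, r] -> Fn `[c, r'[ <= m' ->
  0 <= Jr r' m' - Jr r m <= m' - m.
Proof.
move=> cr rr' r'b mm h1 h2 h3.
have /andP[ar0 ar1] : 0 <= alpha r <= 1 by apply: alpha01; rewrite cr (le_trans rr').
have /andP[ar0' ar1'] : 0 <= alpha r' <= 1 by apply: alpha01; rewrite r'b (le_trans cr).
rewrite /Jr; have [<-|ltrr] := eqVneq r r'.
  have e : m' - Fn `[c, r[ - (m - Fn `[c, r[) = m' - m by ring.
  rewrite opprD addrACA subrr add0r -mulrBl e.
  by rewrite mulr_ge0 ?subr_ge0 //= ler_piMr ?subr_ge0.
have {}ltrr : r < r' by rewrite lt_neqAle ltrr.
have sub1 : `[c, r[ `<=` `[c, b] by apply: subset_itv; rewrite bnd_simp ?lexx ?(le_trans rr').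
have sub2 : [set r] `<=` `[c, b] by move=> x /= ->; rewrite in_itv /= cr (le_trans rr').
have sub3 : `]r, r'[ `<=` `[c, b].
  by apply: subset_itv; rewrite bnd_simp ?(le_trans cr) // ltW.
have sub4 : `[c, r] `<=` `[c, b] by apply: subset_itv; rewrite bnd_simp ?lexx ?(le_trans rr').
have m1 : measurable `[c, r[ by exact: measurable_itv.
have m2 : measurable [set r] by exact: measurable_set1.
have m3 : measurable `]r, r'[ by exact: measurable_itv.
have m4 : measurable `[c, r] by exact: measurable_itv.
have eF : Fn `[c, r'[ = Fn `[c, r[ + Fn [set r] + Fn `]r, r'[.
  by rewrite (@E2 r r' cr ltrr) Fadd ?D2 // (@E1 r cr) Fadd ?D1 //; apply: measurableU.
have eF2 : Fn `[c, r] = Fn `[c, r[ + Fn [set r] by rewrite (@E1 r cr) Fadd ?D1.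
have eG : Gn `[c, r'[ = Gn `[c, r[ + alpha r * Fn [set r] + Gn `]r, r'[.
  rewrite (@E2 r r' cr ltrr) Gadd ?D2 // ?(@E1 r cr) ?Gadd ?D1 ?Gset1 //; try exact: measurableU.
have g0 := Gn_ge0 _ sub3; have g1 := Gn_le _ m3 sub3.
rewrite eG eF; rewrite eF2 in h2; rewrite eF in h3.
move: h1 h2 h3 g0 g1 ar0 ar1 ar0' ar1'.
set F0 := Fn `[c, r[.
set F1 := Fn [set r].
set F2 := Fn `]r, r'[.
set G0 := Gn `[c, r[.
set G2 := Gn `]r, r'[.
set x := alpha r.
set y := alpha r'.
move=> h1 h2 h3 g0 g1 ar0 ar1 ar0' ar1'.
have p1 : 0 <= x * (F0 + F1 - m) <= F0 + F1 - m.
  by rewrite mulr_ge0 ?subr_ge0 //= ler_piMl ?subr_ge0.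
have p2 : 0 <= (m' - (F0 + F1 + F2)) * y <= m' - (F0 + F1 + F2).
  by rewrite mulr_ge0 ?subr_ge0 //= ler_piMr ?subr_ge0.
have e : G0 + x * F1 + G2 + (m' - (F0 + F1 + F2)) * y - (G0 + (m - F0) * x) =
  x * (F0 + F1 - m) + G2 + (m' - (F0 + F1 + F2)) * y by ring.
rewrite e; move: p1 p2 => /andP[p1 p1'] /andP[p2 p2']; apply/andP; split; lra.
Qed.



Hypothesis cb : c <= b.
Let M := Fn `[c, b].

Lemma taucbE : tau `[c, b] = M%:E.
Proof. by rewrite /M /Fn fineK //; apply: mfin; exact: measurable_itv. Qed.

Lemma M_ge0 : 0 <= M.
Proof. exact: Fge0. Qed.

Lemma tpt_lt_M m : 0 <= m -> m < M ->
  exists r, [/\ tpt tau c m = r%:E, c <= r & r <= b].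
Proof.
move=> m0 mM.
have h1 : (tpt tau c m <= b%:E)%E by apply: tpt_le; rewrite taucbE lte_fin.
have h2 := tpt_ge_c _ m0.
move: h1 h2; case: (tpt tau c m) => [r| |] //= h1 h2.
by exists r; split => //; rewrite -lee_fin.
Qed.

Lemma J_rep m r : tpt tau c m = r%:E -> Jint tau c alpha m = Jr r m.
Proof. by move=> tr; rewrite /Jint /atomw tr. Qed.

Lemma E3 : `[c, +oo[ = `[c, b] `|` `]b, +oo[.
Proof.
apply/seteqP; split => x /=; rewrite !in_itv /= ?andbT.
  by move=> cx; have [xb|xb] := leP x b; [left; rewrite cx | right].
by move=> [/andP[-> _]|bx] //; rewrite (le_trans cb (ltW bx)).
Qed.

Lemma D3 : `[c, b] `&` `]b, +oo[ = set0.
Proof.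
apply/seteqP; split => x //= []; rewrite !in_itv /= ?andbT => /andP[_ h1] h2.
by move: (le_lt_trans h1 h2); rewrite ltxx.
Qed.

Lemma ext_null D : measurable D -> `[c, b] `&` D = set0 ->
  (tau (`[c, b] `|` D) <= M%:E)%E ->
  Fn (`[c, b] `|` D) = M /\ Gn (`[c, b] `|` D) = Gn `[c, b].
Proof.
move=> mD disj hle.
have mcb : measurable `[c, b] by exact: measurable_itv.
have tD : tau D = 0%E.
  apply/eqP; rewrite eq_le measure_ge0 andbT.
  have h : (M%:E + tau D <= M%:E)%E.
    rewrite -[X in (X + _)%E]taucbE; move: hle; rewrite (measureU tau mcb mD disj).
    exact: id.
  move: h; have := mfin _ mD; case: (tau D) => [x| |] //= _.
  by rewrite -EFinD !lee_fin gerDl.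
have FD : Fn D = 0 by rewrite /Fn tD.
split; first by rewrite Fadd // FD addr0.
rewrite /Gn /G integral_setU //; last by rewrite disj_set2E disj.
- have -> : (\int[tau]_(x in D) (alpha x)%:E = 0)%E.
    by apply: null_set_integral => //; exact: mfa.
  by rewrite adde0.
- by apply: mfa; exact: measurableU.
Qed.

Lemma J_M : Jint tau c alpha M = Jr b M.
Proof.
have mcb : measurable `[c, b] by exact: measurable_itv.
have bt : (b%:E <= tpt tau c M)%E.
  rewrite leNgt; apply/negP => /tpt_gt; rewrite taucbE ltxx //.
have eb : Gn `[c, b] = Gn `[c, b[ + (M - Fn `[c, b[) * alpha b.
  rewrite /M (@E1 b cb) Gadd ?Fadd ?D1 //; try exact: measurable_itv; try exact: measurable_set1.
  - by rewrite Gset1 addrAC subrr add0r mulrC.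
  - by apply: subset_itv; rewrite bnd_simp ?lexx.
  - by move=> x /= ->; rewrite in_itv /= cb lexx.
rewrite /Jint /atomw /Jr; move: bt; case e: (tpt tau c M) => [r| |] //= bt.
- have [rb|br] := eqVneq r b; first by rewrite rb.
  have {}br : b < r by rewrite lt_neqAle eq_sym br -lee_fin.
  have := F1 _ _ e; rewrite (@E2 b r cb br) => h.
  have [h1 h2] := ext_null _ (measurable_itv _) (D2 _ _) h.
  rewrite /Fn in h1; rewrite /Gn in h2; rewrite h1 subrr mul0r addr0.
  by rewrite h2 -/(Gn _) eb.
- have := F1oo _ e; rewrite E3 => h.
  have [h1 h2] := ext_null _ (measurable_itv _) D3 h.
  by rewrite /Gn in h2; rewrite h2 addr0 -/(Gn _) eb.
Qed.

Lemma rep m : 0 <= m <= M -> exists r,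
  [/\ c <= r <= b, Jint tau c alpha m = Jr r m, Fn `[c, r[ <= m <= Fn `[c, r],
      (m < M -> tpt tau c m = r%:E) & (m = M -> r = b)].
Proof.
move=> /andP[m0 mM]; have [{}mM|mM'] := ltP m M; last first.
  have -> : m = M by apply/eqP; rewrite eq_le mM mM'.
  exists b; split => //; rewrite ?cb ?lexx ?J_M //.
  rewrite Fle ?lexx //=; try exact: measurable_itv.
  by apply: subset_itv; rewrite bnd_simp ?lexx.
have [r [tr cr rb]] := tpt_lt_M _ m0 mM.
have mr1 : measurable `[c, r[ by exact: measurable_itv.
have mr2 : measurable `[c, r] by exact: measurable_itv.
exists r; split => //; first by rewrite cr rb.
  exact: J_rep.
apply/andP; split.
  by rewrite /Fn -lee_fin fineK ?mfin ?(F1 _ _ tr).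
by rewrite /Fn -lee_fin fineK ?mfin ?(F2 _ _ tr).
by move=> mM'; move: mM; rewrite mM' ltxx.
Qed.

Lemma J_lip m m' : 0 <= m -> m <= m' -> m' <= M ->
  0 <= Jint tau c alpha m' - Jint tau c alpha m <= m' - m.
Proof.
move=> m0 mm m'M.
have hm : 0 <= m <= M by rewrite m0 (le_trans mm m'M).
have hm' : 0 <= m' <= M by rewrite (le_trans m0 mm) m'M.
have [r [/andP[cr rb] Jm /andP[h1 h2] t1 t2]] := rep _ hm.
have [r' [/andP[cr' rb'] Jm' /andP[h1' h2'] t1' t2']] := rep _ hm'.
rewrite Jm Jm'; apply: core => //.
have [m'M'|m'M'] := ltP m' M; last first.
  by rewrite t2' //; apply/eqP; rewrite eq_le m'M m'M'.
have := tpt_mono _ _ mm; rewrite t1 ?t1' ?lee_fin //.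
exact: (le_lt_trans mm).
Qed.

Lemma J0 : Jint tau c alpha 0 = 0.
Proof.
have h0 : (0:R) <= 0 <= M by rewrite lexx M_ge0.
have [r [/andP[cr rb] J h _ _]] := rep _ h0.
have f0 : Fn `[c, r[ = 0 by apply/eqP; rewrite eq_le Fge0 andbT; case/andP: h.
have sub : `[c, r[ `<=` `[c, b] by apply: subset_itv; rewrite bnd_simp ?lexx.
have g0 : Gn `[c, r[ = 0.
  apply/eqP; rewrite eq_le Gn_ge0 // andbT -f0.
  exact: (Gn_le _ (measurable_itv _) sub).
by rewrite J /Jr g0 f0 subrr mul0r addr0.
Qed.


Lemma tpt_M_ge_b : (b%:E <= tpt tau c M)%E.
Proof. by rewrite leNgt; apply/negP => /tpt_gt; rewrite taucbE ltxx. Qed.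

Lemma taum_cb : taum tau c M `[c, b] = tau `[c, b].
Proof.
have mcb : measurable `[c, b] by exact: measurable_itv.
have bt := tpt_M_ge_b.
rewrite /taum; move: bt; case e: (tpt tau c M) => [r| |] //= bt.
- have [rb|br] := eqVneq r b.
    subst r; have -> : `[c, b] `&` `[c, b[ = `[c, b[.
      by apply/setIidr; apply: subset_itv; rewrite bnd_simp ?lexx.
    rewrite asboolT /=; last by rewrite in_itv /= cb lexx.
    rewrite /atomw e /= -[X in (X + _)%E]fineK; last by apply: mfin; exact: measurable_itv.
    rewrite -EFinD addrC subrK taucbE //.
  have {}br : b < r by rewrite lt_neqAle eq_sym br -lee_fin.
  have -> : `[c, b] `&` `[c, r[ = `[c, b].
    by apply/setIidl; apply: subset_itv; rewrite bnd_simp ?lexx ?ltW.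
  by rewrite asboolF ?adde0 //= in_itv /= => /andP[_]; rewrite leNgt br.
- rewrite adde0; f_equal; apply/setIidl; apply: subset_itv; rewrite bnd_simp ?lexx //.
Qed.

End Meas.

Lemma sup_char (R : realType) (f : R -> R) (M q : R) : 0 <= M -> 0 < q -> f 0 = 0 ->
  (forall m m', 0 <= m -> m <= m' -> m' <= M -> 0 <= f m' - f m <= m' - m) ->
  let s := sup [set m : R | 0 <= m <= M /\ f m < q] in
  [/\ 0 <= s, s <= M, f s <= q & (s < M -> f s = q)].
Proof.
move=> M0 q0 f0 lip s.
set E := [set m : R | 0 <= m <= M /\ f m < q].
have E0 : E 0 by split; [rewrite lexx M0 | rewrite f0].
have ubM : ubound E M by move=> x [/andP[_ ->]].
have hs : has_sup E by split; [exists 0 | exists M].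
have s0 : 0 <= s by apply: sup_upper_bound.
have sM : s <= M by apply: ge_sup => //; exists 0.
have fsq : f s <= q.
  rewrite leNgt; apply/negP => qfs.
  have eps0 : 0 < f s - q by rewrite subr_gt0.
  have [e [/andP[e0 eM] fe] se] := sup_adherent eps0 hs.
  have es : e <= s by apply: sup_upper_bound => //; split; [rewrite e0 eM|].
  have /andP[_ h] := lip e s e0 es sM.
  rewrite -/s in se; lra.
split => // sM'.
apply/eqP; rewrite eq_le fsq /=; rewrite leNgt; apply/negP => fsq'.
set d := Num.min (q - f s) (M - s).
have d0 : 0 < d by rewrite lt_min !subr_gt0 fsq' sM'.
have d1 : d <= q - f s by rewrite ge_min lexx.
have d2 : d <= M - s by rewrite ge_min lexx orbT.
have Ey : E (s + d / 2).
  have l1 : s <= s + d / 2 by lra.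
  have l2 : s + d / 2 <= M by lra.
  have /andP[_ h] := lip s (s + d / 2) s0 l1 l2.
  split; first by apply/andP; split; lra.
  lra.
have := sup_upper_bound hs Ey; rewrite -/s; lra.
Qed.

Section Main.
Variable R : realType.

Definition Inv (s : state R) : Prop :=
  [/\ sorted <%R (st_t s), (forall k, 0 <= (st_q s)`_k) & (st_tau s setT < +oo)%E].

Lemma mU2 (tau : {measure set R -> \bar R}) {A B : set R} :
  measurable A -> measurable B -> (tau (A `|` B) <= tau A + tau B)%E.
Proof. by move=> mA mB; exact: measureU2. Qed.

Lemma leM (tau : {measure set R -> \bar R}) {A B : set R} :
  measurable A -> measurable B -> A `<=` B -> (tau A <= tau B)%E.
Proof. by move=> mA mB AB; apply: le_measure; rewrite ?inE. Qed.

Lemma mge0 (tau : {measure set R -> \bar R}) (A : set R) : (0 <= tau A)%E.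
Proof. exact: measure_ge0. Qed.

Lemma null_of_not_pos (x : \bar R) : (0 <= x)%E -> ~ (0 < x)%E -> x = 0%E.
Proof. by move=> x0 nx; apply/eqP; rewrite eq_le x0 andbT leNgt; apply/negP. Qed.

Lemma cells_null_cover (tau : {measure set R -> \bar R}) (t : seq R) (j : nat) :
  (forall k, (k < j)%N -> tau (cell t k) = 0%E) ->
  forall k, (0 < k)%N -> (k <= j)%N -> (k < size t)%N -> tau `[t`_0, t`_k] = 0%E.
Proof.
move=> hc; elim=> [//|k IH] _ kj ks.
have cellk : cell t k = `[t`_k, t`_k.+1] by rewrite /cell ks.
have hk := hc k kj; rewrite cellk in hk.
case: k IH kj ks cellk hk => [|k] IH kj ks cellk hk; first by [].
have IH' := IH isT (ltnW kj) (ltnW ks).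
apply/eqP; rewrite eq_le measure_ge0 andbT.
have sub : `[t`_0, t`_k.+2] `<=` `[t`_0, t`_k.+1] `|` `[t`_k.+1, t`_k.+2].
  move=> x /=; rewrite !in_itv /= => /andP[h1 h2].
  by have [xk|xk] := leP x t`_k.+1; [left; rewrite h1 | right; rewrite h2 ltW].
have mU : measurable (`[t`_0, t`_k.+1] `|` `[t`_k.+1, t`_k.+2]).
  by apply: measurableU; exact: measurable_itv.
have m1 : measurable `[t`_0, t`_k.+2] by exact: measurable_itv.
have m2 : measurable `[t`_0, t`_k.+1] by exact: measurable_itv.
have m3 : measurable `[t`_k.+1, t`_k.+2] by exact: measurable_itv.
have h1 := leM tau m1 mU sub.
have h2 := mU2 tau m2 m3.
rewrite IH' hk adde0 in h2.
exact: le_trans h1 h2.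
Qed.

Lemma first_cell_null (s : state R) j :
  first_cell s j -> forall k, (k < j)%N -> st_tau s (cell (st_t s) k) = 0%E.
Proof.
by move=> [_ [_ h]] k kj; apply: null_of_not_pos; [exact: measure_ge0 | exact: h].
Qed.

Lemma fc_lt (s : state R) j : reaches4 s -> first_cell s j ->
  (1 < size (st_t s))%N -> (j.+1 < size (st_t s))%N.
Proof.
move=> [sz0 [_ hne]] fc sz1; have [jsz _] := fc.
rewrite ltn_neqAle jsz andbT; apply/negP => /eqP ej.
have j0 : (0 < j)%N by rewrite -ltnS ej.
have := cells_null_cover _ _ _ (first_cell_null _ _ fc) _ j0 (leqnn j) jsz.
by move: hne; rewrite -ej /= => hne h; move: hne; rewrite h eqxx.
Qed.

Lemma rem_subseq i (t : seq R) : subseq (rem_at i t) t.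
Proof.
rewrite /rem_at -[X in subseq _ X](cat_take_drop i t); apply: cat_subseq (subseq_refl _) _.
by rewrite -add1n -drop_drop; exact: drop_subseq.
Qed.

Lemma size_rem i (t : seq R) : (i < size t)%N -> size (rem_at i t) = (size t).-1.
Proof. by move=> it; rewrite /rem_at size_cat size_take size_drop it; lia. Qed.

Lemma subseq_ge0 (s t : seq R) : subseq s t -> (forall k, 0 <= t`_k) ->
  forall k, 0 <= s`_k.
Proof.
move=> st ht k; have [kl|kl] := ltnP k (size s); last by rewrite nth_default.
have /nthP := mem_subseq st (mem_nth 0 kl); move=> /(_ 0) [i _ <-]; exact: ht.
Qed.

Lemma Inv_4a (s : state R) : Inv s ->
  Inv (State (behead (st_q s)) (behead (st_t s)) (st_tau s)).
Proof.
case=> st hq ht; split => //=.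
- by case: (st_t s) st => //= x l; exact: path_sorted.
- by move=> k; rewrite nth_behead.
Qed.

Lemma Inv_4b (s : state R) i : Inv s ->
  Inv (State (rem_at i (st_q s)) (rem_at i (st_t s)) (st_tau s)).
Proof.
case=> st hq ht; split => //=.
- apply: (subseq_sorted _ (rem_subseq i (st_t s)) st); exact: lt_trans.
- exact: subseq_ge0 (rem_subseq _ _) hq.
Qed.


Lemma alpha1_01 (a b c : R) : a <= c -> c < b ->
  forall x, c <= x <= b -> 0 <= alpha1 a b x <= 1.
Proof.
move=> ac cb x /andP[cx xb]; have ab : 0 < b - a by rewrite subr_gt0 (le_lt_trans ac cb).
have h1 : 0 <= (b - x) / (b - a) by apply: divr_ge0; lra.
have h2 : (b - x) / (b - a) <= 1 by rewrite ler_pdivrMr // mul1r; lra.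
by rewrite /alpha1 h1 h2.
Qed.

Lemma alphan1_01 (a b c : R) : a <= c -> c < b ->
  forall x, c <= x <= b -> 0 <= alphan1 a b x <= 1.
Proof.
move=> ac cb x /andP[cx xb]; have ab : 0 < b - a by rewrite subr_gt0 (le_lt_trans ac cb).
have h1 : 0 <= (x - a) / (b - a) by apply: divr_ge0; lra.
have h2 : (x - a) / (b - a) <= 1 by rewrite ler_pdivrMr // mul1r; lra.
by rewrite /alphan1 h1 h2.
Qed.

Lemma m_alpha1 (a b : R) : measurable_fun setT (alpha1 a b).
Proof.
rewrite /alpha1; apply: measurable_funM; last exact: measurable_cst.
by apply: measurable_funB; [exact: measurable_cst | exact: measurable_id].
Qed.

Lemma m_alphan1 (a b : R) : measurable_fun setT (alphan1 a b).
Proof.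
rewrite /alphan1; apply: measurable_funM; last exact: measurable_cst.
by apply: measurable_funB; [exact: measurable_id | exact: measurable_cst].
Qed.

Lemma measurable_cell (t : seq R) k : measurable (cell t k).
Proof. by rewrite /cell; case: ifP => _; exact: measurable_itv. Qed.

Lemma sorted_nth_lt (t : seq R) i k : sorted <%R t -> (i < k)%N -> (k < size t)%N ->
  t`_i < t`_k.
Proof.
move=> st ik ks; have tr : transitive (<%R : rel R) by move=> ? ? ?; exact: lt_trans.
by apply: (sorted_ltn_nth tr 0 st) => //; rewrite inE //= (ltn_trans ik).
Qed.

Lemma step4c (s : state R) j (tau' : {measure set R -> \bar R}) :
  Inv s -> reaches4 s -> first_cell s j -> (st_q s)`_0 != 0 ->
  ~ ((st_q s)`_j.+1 = 0 /\ (1 < size (st_t s))%N) -> (j.+1 < size (st_t s))%N ->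
  (forall A, measurable A ->
     tau' A = (st_tau s A - taum (st_tau s) (st_t s)`_j (Mmin s j) A)%E) ->
  [/\ Inv (State (q4c s j) (st_t s) tau'),
      (forall k, (k < j)%N -> tau' (cell (st_t s) k) = 0%E) &
      (tau' (cell (st_t s) j) = 0%E \/ (q4c s j)`_0 = 0 \/ (q4c s j)`_j.+1 = 0)].
Proof.
move=> inv R4 fc q0n nq jsz1 htau.
have nullk := first_cell_null _ _ fc.
case: s inv R4 fc q0n nq jsz1 htau nullk => q t tau [/= st hq tfin] R4 fc /= q0n nq jsz1 htau nullk.
have ac : t`_0 <= t`_j.
  have [->|j0] := posnP j; first exact: lexx.
  by apply: ltW; apply: sorted_nth_lt => //; exact: ltnW.
have cb : t`_j < t`_j.+1 by apply: sorted_nth_lt.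
have cbW := ltW cb.
have qpos : 0 < q`_0 by rewrite lt0r q0n hq.
have qjpos : 0 < q`_j.+1.
  rewrite lt0r hq andbT; apply/eqP => h; apply: nq; split => //.
  by apply: leq_ltn_trans jsz1.
have cellj : cell t j = `[t`_j, t`_j.+1] by rewrite /cell jsz1.
have a1 := alpha1_01 _ _ _ ac cb; have a2 := alphan1_01 _ _ _ ac cb.
have ma1 := m_alpha1 t`_0 t`_j.+1; have ma2 := m_alphan1 t`_0 t`_j.+1.
set M := Fn _ tau `[t`_j, t`_j.+1].
have MtotE : Mtot (State q t tau) j = M by rewrite /Mtot /= cellj.
have M0 : 0 <= M by exact: fine_ge0.
have lip1 := J_lip _ _ tfin _ _ _ ma1 a1 cbW.
have lip2 := J_lip _ _ tfin _ _ _ ma2 a2 cbW.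
have J10 := J0 _ _ tfin _ _ _ ma1 a1 cbW.
have J20 := J0 _ _ tfin _ _ _ ma2 a2 cbW.
have [s10 s1M s1q s1eq] := @sup_char R (J1 (State q t tau) j) M (q`_0) M0 qpos J10 lip1.
have [s20 s2M s2q s2eq] := @sup_char R (Jn1 (State q t tau) j) M (q`_j.+1) M0 qjpos J20 lip2.
have M1E : M1 (State q t tau) j =
    sup [set m | 0 <= m <= M /\ J1 (State q t tau) j m < q`_0] by rewrite /M1 MtotE.
have Mn1E : Mn1 (State q t tau) j =
    sup [set m | 0 <= m <= M /\ Jn1 (State q t tau) j m < q`_j.+1] by rewrite /Mn1 MtotE.
rewrite -M1E in s10 s1M s1q s1eq; rewrite -Mn1E in s20 s2M s2q s2eq.
set m1 := M1 (State q t tau) j in s10 s1M s1q s1eq.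
set m2 := Mn1 (State q t tau) j in s20 s2M s2q s2eq.
have mmE : Mmin (State q t tau) j = Num.min m1 m2 by [].
set mm := Mmin (State q t tau) j in mmE htau *.
have mm0 : 0 <= mm by rewrite mmE le_min s10 s20.
have mm1 : mm <= m1 by rewrite mmE ge_min lexx.
have mm2 : mm <= m2 by rewrite mmE ge_min lexx orbT.
have mmM : mm <= M by apply: le_trans mm1 s1M.
have J1le : J1 (State q t tau) j mm <= q`_0.
  by apply: (le_trans _ s1q); move: (lip1 mm m1 mm0 mm1 s1M) => /andP[h1 _]; rewrite subr_ge0 in h1.
have J2le : Jn1 (State q t tau) j mm <= q`_j.+1.
  by apply: (le_trans _ s2q); move: (lip2 mm m2 mm0 mm2 s2M) => /andP[h1 _]; rewrite subr_ge0 in h1.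
have nq4 k : (q4c (State q t tau) j)`_k =
    if k == j.+1 then q`_j.+1 - Jn1 (State q t tau) j mm
    else if k == 0%N then q`_0 - J1 (State q t tau) j mm else q`_k.
  by rewrite /q4c /= !nth_set_nth /= nth_set_nth /=.
have tfin' : (tau' setT < +oo)%E.
  rewrite htau //; have : (tau setT - taum tau t`_j mm setT)%E \is a fin_num.
    by rewrite fin_numB mfin // taum_fin.
  by move/fin_numPlt => /andP[].
split.
- split => //= k; rewrite nq4.
  case: eqP => _; first by rewrite subr_ge0.
  by case: eqP => _; [rewrite subr_ge0 | exact: hq].
- move=> k kj; rewrite htau; last exact: measurable_cell.
  rewrite nullk // sub0e.
  have h0 : (0 <= taum tau t`_j mm (cell t k))%E by apply: taum_ge0 => //; exact: measurable_cell.
  have h1 : (0 <= - taum tau t`_j mm (cell t k))%E.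
    have := mge0 tau' (cell t k); rewrite htau; last exact: measurable_cell.
    by rewrite nullk // sub0e.
  apply/eqP; rewrite eq_le h1 andbT; by rewrite leeNl oppe0.
have [h12|h12] := leP m1 m2.
- have mmE1 : mm = m1 by rewrite mmE min_l.
  have [lt1|ge1] := ltP m1 M.
    by right; left; rewrite nq4 /= mmE1 s1eq // subrr.
  have mmM' : mm = M by apply/eqP; rewrite eq_le mmM mmE1 ge1.
  left; rewrite htau; last exact: measurable_cell.
  rewrite cellj mmM' taum_cb // subee //.
  by apply: mfin => //; exact: measurable_itv.
- have mmE2 : mm = m2 by rewrite mmE min_r // ltW.
  have lt2 : m2 < M by apply: lt_le_trans h12 s1M.
  by right; right; rewrite nq4 eqxx mmE2 s2eq // subrr.
Qed.


Lemma term_main n : forall s : state R, (size (st_t s) <= n)%N -> Inv s -> terminates s.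
Proof.
elim: n => [|n IHn] s.
  move=> sz _; constructor => s' H; exfalso.
  have [h _] : reaches4 s by case: H.
  by move: sz; rewrite leqn0 => /eqP e; rewrite e in h.
have ab4a : forall s0, (size (st_t s0) <= n.+1)%N -> Inv s0 -> reaches4 s0 ->
    terminates (State (behead (st_q s0)) (behead (st_t s0)) (st_tau s0)).
  move=> s0 sz inv [h _]; apply: IHn; last exact: Inv_4a.
  by rewrite /= size_behead; move: sz h; clear; lia.
have ab4b : forall s0 j, (size (st_t s0) <= n.+1)%N -> Inv s0 -> reaches4 s0 ->
    first_cell s0 j -> (1 < size (st_t s0))%N ->
    terminates (State (rem_at j.+1 (st_q s0)) (rem_at j.+1 (st_t s0)) (st_tau s0)).
  move=> s0 j sz inv R4 fc s1; apply: IHn; last exact: Inv_4b.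
  have := fc_lt _ _ R4 fc s1 => jl.
  by rewrite /= size_rem //; move: sz jl; clear; lia.
suff H : forall k p (s : state R), (n.+1 <= p + k)%N -> (size (st_t s) <= n.+1)%N ->
    Inv s -> (forall i, (i < p)%N -> st_tau s (cell (st_t s) i) = 0%E) -> terminates s.
  by move=> sz inv; apply: (H n.+1 0%N).
elim=> [|k IHk] p s0 hp sz inv hnull; constructor => s' H;
  case: H inv hnull => [j R4 fc _|j R4 fc _ _ s1|j tau' R4 fc q0 nq jsz htau] inv hnull.
- exact: ab4a.
- exact: ab4b R4 fc s1.
- have [_ [pos _]] := fc.
  have jp : (p <= j)%N.
    by rewrite leqNgt; apply/negP => jp; rewrite hnull // ltxx in pos.
  by exfalso; move: hp jp jsz sz; clear; lia.
- exact: ab4a.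
- exact: ab4b R4 fc s1.
- have [_ [pos _]] := fc.
  have jp : (p <= j)%N.
    by rewrite leqNgt; apply/negP => jp; rewrite hnull // ltxx in pos.
  have [inv' null' prog] := step4c _ _ _ inv R4 fc q0 nq jsz htau.
  have [z|nz] := eqVneq (tau' (cell (st_t s0) j)) 0%E.
    apply: (IHk j.+1) => //=.
    - by move: hp jp; clear; lia.
    - move=> i; rewrite ltnS leq_eqVlt; case/orP => [/eqP->|]; [exact: z | exact: null'].
  have qz : (q4c s0 j)`_0 = 0 \/ (q4c s0 j)`_j.+1 = 0.
    by case: prog => [z|//]; rewrite z eqxx in nz.
  constructor => s'' H; case: H inv' =>
    [j' R4' fc' _|j' R4' fc' _ _ s1'|j' tau'' R4' fc' q0' nq' jsz' htau'] inv'.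
  + exact: ab4a.
  + exact: ab4b R4' fc' s1'.
  + exfalso; have [_ [pos' min']] := fc'.
    have jj : j' = j.
      case: (ltngtP j' j) => [lt|gt|->] //.
        by move: pos'; rewrite /= null' // ltxx.
      have hp0 : (0 < tau' (cell (st_t s0) j))%E by rewrite lt0e nz mge0.
      by case: (min' j gt hp0).
    subst j'; move: q0' nq' => /= q0' nq'.
    case: qz => [h|h]; first by rewrite h eqxx in q0'.
    apply: nq'; split => //; move: jsz; clear; lia.
Qed.

End Main.

Theorem proposition3 (R : realType) (q t : seq R)
    (tau : {measure set R -> \bar R})
    (d : measure_display) (I : measurableType d)
    (di : {measure set I -> \bar R}) (T : I -> R) :
  size q = size t ->
  sorted <%R t ->
  all (fun x => 0 <= x) q ->
  (* (T : I -> [t_1, t_N]) is an offer profile subject to (q, t) *)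
  di setT = (\sum_(x <- q) x)%:E ->
  measurable_fun setT T ->
  (forall i, t`_0 <= T i <= t`_(size t).-1) ->
  (\int[di]_(i in setT) (T i)%:E)%E = (\sum_(k < size t) q`_k * t`_k)%:E ->
  (* tau is its distribution *)
  (forall A, measurable A -> tau A = di (T @^-1` A)) ->
  terminates (State q t tau).
Proof.
move=> hsz st hq hdi mT hT hint htau.
apply: (@term_main R (size t)) => //.
split => //=.
- move=> k; have [kl|kl] := ltnP k (size q); last by rewrite nth_default.
  exact: (all_nthP 0 hq).
- by rewrite htau // preimage_setT hdi ltry.
Qed.
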